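(* Let $U$ and $V$ be finite-dimensional vector spaces over a field $\mathbb{K}$. Let $\mathcal{T}$ be an additive subgroup of $\mathcal{L}(U,V)$ that contains a linear subspace $\mathcal{S}$ with $\operatorname{codim}_{\mathcal{L}(U,V)}\mathcal{S}\leq\dim V-2$, and let $F:\mathcal{T}\to V$ be a range-compatible group homomorphism. Then $F$ is local: there exists $x\in U$ with $F(t)=t(x)$ for all $t\in\mathcal{T}$.
   Context: A map $F:\mathcal{T}\to V$ on a subset $\mathcal{T}\subset\mathcal{L}(U,V)$ is range-compatible when $F(t)\in\operatorname{im}t$ for all $t\in\mathcal{T}$. *)

(* Defs.v *)
From HB Require Import structures.
From mathcomp Require Import all_boot all_order all_algebra.
Set Implicit Arguments. Unset Strict Implicit. Unset Printing Implicit Defensive.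
Import GRing.Theory.
Local Open Scope ring_scope.

Definition range_compatible (K : fieldType) (U V : vectType K)
  (T : {pred 'Hom(U, V)}) (F : 'Hom(U, V) -> V) : Prop :=
  forall t, t \in T -> F t \in limg t.

Definition is_local (K : fieldType) (U V : vectType K)
  (T : {pred 'Hom(U, V)}) (F : 'Hom(U, V) -> V) : Prop :=
  exists x : U, forall t, t \in T -> F t = t x.

(* Main.v *)
Require Import Defs.
From HB Require Import structures.
From mathcomp Require Import all_boot all_order all_algebra.
From mathcomp Require Import zify.
From Stdlib Require Import ClassicalEpsilon.
Set Implicit Arguments. Unset Strict Implicit. Unset Printing Implicit Defensive.
Import GRing.Theory.
Local Open Scope ring_scope.

Definition rk1f (K : fieldType) (U V : vectType K) (y : V) (j : 'I_(\dim {:U})) (u : U) : V :=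
  coord (vbasis {:U}) j u *: y.
Fact rk1f_lin (K : fieldType) (U V : vectType K) (y : V) j : linear (@rk1f K U V y j).
Proof. by move=> a u v; rewrite /rk1f linearP scalerDl scalerA. Qed.
HB.instance Definition _ (K : fieldType) (U V : vectType K) (y : V) j :=
  GRing.isSemilinear.Build K U V _ (@rk1f K U V y j) (GRing.semilinear_linear (rk1f_lin y j)).
Definition rk1 (K : fieldType) (U V : vectType K) (y : V) j : 'Hom(U,V) := linfun (@rk1f K U V y j).
Lemma rk1E (K : fieldType) (U V : vectType K) (y : V) j u :
  rk1 y j u = coord (vbasis {:U}) j u *: y.
Proof. by rewrite lfunE. Qed.

Lemma rk1_decomp (K : fieldType) (U V : vectType K) (t : 'Hom(U,V)) :
  t = \sum_(j < \dim {:U}) rk1 (t (vbasis {:U})`_j) j.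
Proof.
apply/lfunP => u; rewrite sum_lfunE {1}(coord_vbasis (memvf u)) linear_sum.
by apply: eq_bigr => j _; rewrite rk1E linearZ.
Qed.

Lemma rk1D (K : fieldType) (U V : vectType K) (y1 y2 : V) j :
  rk1 (y1 + y2) j = rk1 y1 j + rk1 y2 j :> 'Hom(U,V).
Proof. by apply/lfunP => u; rewrite add_lfunE !rk1E scalerDr. Qed.

Lemma rk1_img (K : fieldType) (U V : vectType K) (y : V) j :
  (limg (rk1 y j : 'Hom(U,V)) <= <[y]>)%VS.
Proof.
apply/subvP => v /memv_imgP [u _ ->]; rewrite rk1E; exact: memvZ (memv_line _).
Qed.

Definition evl (K : fieldType) (U V : vectType K) (z : U) (t : 'Hom(U,V)) : V := t z.
Fact evl_lin (K : fieldType) (U V : vectType K) (z : U) : linear (@evl K U V z).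
Proof. by move=> a s t; rewrite /evl add_lfunE scale_lfunE. Qed.
HB.instance Definition _ (K : fieldType) (U V : vectType K) (z : U) :=
  GRing.isSemilinear.Build K 'Hom(U,V) V _ (@evl K U V z) (GRing.semilinear_linear (evl_lin z)).

Definition compl (K : fieldType) (U V V' : vectType K) (p : 'Hom(V,V')) (t : 'Hom(U,V)) : 'Hom(U,V') :=
  (p \o t)%VF.
Fact compl_lin (K : fieldType) (U V V' : vectType K) p : linear (@compl K U V V' p).
Proof. by move=> a s t; rewrite /compl comp_lfunDr comp_lfunZr. Qed.
HB.instance Definition _ (K : fieldType) (U V V' : vectType K) p :=
  GRing.isSemilinear.Build K 'Hom(U,V) 'Hom(U,V') _ (@compl K U V V' p) (GRing.semilinear_linear (compl_lin p)).

Lemma dimHom (K : fieldType) (U V : vectType K) : \dim {:'Hom(U,V)} = (\dim {:U} * \dim {:V})%N.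
Proof. by rewrite !dimvf. Qed.
Lemma dimSub (K : fieldType) (V : vectType K) (W : {vspace V}) : \dim {:subvs_of W} = \dim W.
Proof. by rewrite dimvf. Qed.
Lemma indep2 (K : fieldType) (V : vectType K) (y y0 : V) (a b : K) :
  y0 != 0 -> y \notin <[y0]>%VS -> a *: y + b *: y0 = 0 -> a = 0 /\ b = 0.
Proof.
move=> y0n0 yn E.
have a0 : a = 0.
  apply/eqP; apply: contraNT yn => an0.
  apply/vlineP; exists (- (a^-1 * b)).
  have -> : y = a^-1 *: (a *: y) by rewrite scalerA mulVf // scale1r.
  have Ey : a *: y = - (b *: y0) by apply/eqP; rewrite -addr_eq0 E.
  by rewrite Ey scalerN scalerA scaleNr.
split=> //; move: E; rewrite a0 scale0r add0r => /eqP.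
by rewrite scaler_eq0 (negbTE y0n0) orbF => /eqP.
Qed.

Lemma notin_line_add (K : fieldType) (V : vectType K) (y w y0 : V) :
  y \in <[y0]>%VS -> w \notin <[y0]>%VS -> y + w \notin <[y0]>%VS.
Proof.
move=> yi; apply: contra => H.
by have := memvB H yi; rewrite addrC addKr.
Qed.

Lemma eigen_add (K : fieldType) (V : vectType K) (g : V -> V) :
  (forall a b, g (a + b) = g a + g b) -> (forall y, g y \in <[y]>%VS) ->
  (1 < \dim {:V})%N -> exists c : K, forall y, g y = c *: y.
Proof.
move=> gD gl dimV.
set y0 := vpick {:V}.
have y0n0 : y0 != 0.
  by rewrite vpick0 -dimv_eq0; apply: contraTneq dimV => ->.
have [w _ wn] : exists2 w, w \in {:V} & w \notin <[y0]>%VS.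
  have : ~~ (fullv <= <[y0]>)%VS.
    apply: contraTN dimV => /dimvS.
    by rewrite dim_vline y0n0 => H; rewrite -ltnNge ltnS.
  by case/subvPn => w ? ?; exists w.
have [c Ec] := vlineP _ _ (gl y0).
have main : forall y, y \notin <[y0]>%VS -> g y = c *: y.
  move=> y yn.
  have [a Ea] := vlineP _ _ (gl y).
  have [b Eb] := vlineP _ _ (gl (y + y0)).
  move: Eb; rewrite gD Ea Ec scalerDr => Eb.
  have : (a - b) *: y + (c - b) *: y0 = 0.
    by rewrite !scalerBl addrACA Eb -opprD subrr.
  move/(indep2 y0n0 yn) => [/eqP + /eqP]; rewrite !subr_eq0 => /eqP -> /eqP ->.
  by [].
exists c => y.
have [yi | yn] := boolP (y \in <[y0]>%VS); last exact: main.
have := main _ (notin_line_add yi wn); rewrite gD (main _ wn) scalerDr.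
by move/addIr.
Qed.

Lemma full_local (K : fieldType) (U V : vectType K) (F : 'Hom(U,V) -> V) :
  (forall s t, F (s + t) = F s + F t) -> (forall t, F t \in limg t) ->
  (1 < \dim {:V})%N -> exists x, forall t, F t = t x.
Proof.
move=> FD Frc dimV.
have F0 : F 0 = 0 by apply: (addIr (F 0)); rewrite add0r -FD addr0.
have : forall j : 'I_(\dim {:U}), exists c : K, forall y, F (rk1 y j) = c *: y.
  move=> j; apply: eigen_add => //.
    by move=> a b; rewrite rk1D FD.
  by move=> y; exact: subvP (rk1_img y j) _ (Frc _).
case/fin_all_exists => c Hc.
exists (\sum_j c j *: (vbasis {:U})`_j) => t.
rewrite {1}(rk1_decomp t) (big_morph F FD F0) linear_sum.
by apply: eq_bigr => j _; rewrite Hc linearZ.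
Qed.

Lemma exists_coord_nz (K : fieldType) (U : vectType K) (z : U) :
  z != 0 -> exists j, coord (vbasis {:U}) j z != 0.
Proof.
move=> zn0; apply/existsP; apply: contraNT zn0; rewrite negb_exists => /forallP H.
rewrite (coord_vbasis (memvf z)) big1 // => j _.
by have := H j; rewrite negbK => /eqP ->; rewrite scale0r.
Qed.

Lemma glue (K : fieldType) (U V : vectType K) (S : {vspace 'Hom(U,V)}) (y1 y2 : V) j (z : U) :
  (\dim {:'Hom(U, V)} - \dim S + 2 <= \dim {:V})%N ->
  rk1 y1 j \notin S ->
  (forall t, t \in S -> t z \in (<[y1]> + <[y2]>)%VS) -> z = 0.
Proof.
move=> codim t1n Hz; apply/eqP/negP => /negP zn0.
have [j0 cn0] := exists_coord_nz zn0.
pose ev : 'Hom('Hom(U,V), V) := linfun (evl z).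
have evE t : ev t = t z by rewrite lfunE.
have surj : limg ev = fullv.
  apply/eqP; rewrite eqEsubv subvf /=; apply/subvP => w _.
  apply/memv_imgP; exists ((coord (vbasis {:U}) j0 z)^-1 *: rk1 w j0); first exact: memvf.
  by rewrite evE scale_lfunE rk1E scalerA mulVf // scale1r.
have dker := limg_ker_dim ev fullv; rewrite capfv surj in dker.
pose S1 := (S + <[rk1 y1 j]>)%VS.
have dS1 : (\dim S < \dim S1)%N.
  rewrite (ltn_leqif (dimv_leqif_eq (addvSl _ _))); apply: contra t1n => /eqP ->.
  apply/memv_addP; exists 0; first exact: mem0v.
  by exists (rk1 y1 j); [exact: memv_line | rewrite add0r].
have sub : (ev @: S1 <= <[y1]> + <[y2]>)%VS.
  apply/subvP => v /memv_imgP [s /memv_addP [s0 s0S [s1 /vlineP [k ->] ->]] ->].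
  rewrite linearD linearZ /= !evE; apply: memvD; first exact: Hz.
  apply: memvZ; rewrite rk1E; apply: (subvP (addvSl _ _)).
  exact: memvZ (memv_line _).
have dP : (\dim (<[y1]> + <[y2]>)%VS <= 2)%N.
  apply: leq_trans (dimv_add_leqif _ _) _; rewrite !dim_vline.
  by case: (y1 != 0); case: (y2 != 0).
have d1 := dimvS sub.
have d2 : (\dim S1 <= \dim (lker ev) + \dim (ev @: S1))%N.
  by rewrite -(limg_ker_dim ev S1) leq_add2r dimvS // capvSr.
have d4 := dimvS (subvf S).
rewrite dimHom in codim dker d4.
lia.
Qed.

Definition local_thm (K : fieldType) (U V : vectType K) : Prop :=
  forall (T : {pred 'Hom(U, V)})
  (T0 : 0 \in T) (TB : forall s t, s \in T -> t \in T -> s - t \in T)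
  (S : {vspace 'Hom(U, V)}) (ST : forall s, s \in S -> s \in T)
  (codimS : (\dim {:'Hom(U, V)} - \dim S + 2 <= \dim {:V})%N)
  (F : 'Hom(U, V) -> V)
  (Fadd : forall s t, s \in T -> t \in T -> F (s + t) = F s + F t)
  (Frc : range_compatible T F), is_local T F.

Section Tst.
Variables (K : fieldType) (V : vectType K) (y : V) (yn0 : y != 0).
Let W' := (<[y]>^C)%VS.
Let p0 : 'End(V) := daddv_pi W' <[y]>.
Let p : 'Hom(V, subvs_of W') := (linfun (vsproj W') \o p0)%VF.
Lemma pE v : p v = vsproj W' (p0 v). Proof. by rewrite comp_lfunE lfunE. Qed.
Lemma capW : (W' :&: <[y]> = 0)%VS. Proof. by rewrite capvC capv_compl. Qed.
Lemma sumW v : v \in (W' + <[y]>)%VS. Proof. by rewrite addvC addv_complf memvf. Qed.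
Lemma pker v : (p v == 0) = (v \in <[y]>%VS).
Proof.
have Hadd := daddv_pi_add capW (sumW v).
rewrite pE -(inj_eq (@subvs_inj _ _ W')) vsprojK ?memv_pi // linear0.
apply/eqP/idP => [H | H].
  by rewrite -Hadd -/p0 H add0r memv_pi.
move: Hadd; rewrite (daddv_pi_id _ H); last by rewrite capvC capW.
by move=> E; apply: (addIr v); rewrite add0r.
Qed.

Lemma pyE : p y = 0.
Proof. by apply/eqP; rewrite pker memv_line. Qed.

Lemma p_sec (w : subvs_of W') : p (vsval w) = w.
Proof. by rewrite pE daddv_pi_id ?subvsP ?capW // vsvalK. Qed.

Lemma dimW : \dim {:V} = (\dim {:subvs_of W'}).+1.
Proof.
rewrite dimSub /W' dimv_compl dim_vline yn0.
have : (0 < \dim {:V})%N.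
  by rewrite lt0n dimv_eq0; apply: contra yn0 => /eqP F0; rewrite -memv0 -F0 memvf.
by case: (\dim {:V}) => // k _; rewrite subn1.
Qed.

Variables (U : vectType K) (T : {pred 'Hom(U, V)})
  (T0 : 0 \in T) (TB : forall s t, s \in T -> t \in T -> s - t \in T)
  (S : {vspace 'Hom(U, V)}) (ST : forall s, s \in S -> s \in T)
  (codimS : (\dim {:'Hom(U, V)} - \dim S + 2 <= \dim {:V})%N)
  (F : 'Hom(U, V) -> V)
  (Fadd : forall s t, s \in T -> t \in T -> F (s + t) = F s + F t)
  (Frc : range_compatible T F)
  (j : 'I_(\dim {:U})) (good : rk1 y j \notin S)
  (IH : local_thm U (subvs_of W')).

Let Tpre s (t : 'Hom(U,V)) := t \in T /\ s = (p \o t)%VF.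
Let T' : {pred 'Hom(U, subvs_of W')} :=
  fun s => if excluded_middle_informative (exists t, Tpre s t) then true else false.
Lemma T'P s : reflect (exists t, Tpre s t) (s \in T').
Proof.
rewrite unfold_in /T'; case: excluded_middle_informative => H; first by left.
by right.
Qed.
Let pre s := epsilon (inhabits 0) (Tpre s).
Let G s := p (F (pre s)).

Lemma Tsub s t : s \in T -> t \in T -> F (s - t) = F s - F t.
Proof.
move=> sT tT; apply/eqP; rewrite eq_sym subr_eq -Fadd ?TB //.
by rewrite subrK.
Qed.

Lemma GE t : t \in T -> G (p \o t)%VF = p (F t).
Proof.
move=> tT.
have [preT preE] : Tpre (p \o t)%VF (pre (p \o t)%VF).
  by apply: epsilon_spec; exists t.
set u := pre _ in preT preE *.
rewrite /G -/u.
have dT : t - u \in T by apply: TB.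
have pd : (p \o (t - u))%VF = 0 by rewrite comp_lfunDr comp_lfunNr -preE subrr.
have Fd : p (F (t - u)) = 0.
  have /memv_imgP [w _ ->] := Frc dT.
  by rewrite -comp_lfunE pd zero_lfunE.
by move: Fd; rewrite Tsub // linearB => /eqP; rewrite subr_eq0 => /eqP.
Qed.


Let Cp : 'Hom('Hom(U,V), 'Hom(U, subvs_of W')) := linfun (compl (U:=U) p).
Lemma CpE t : Cp t = (p \o t)%VF. Proof. by rewrite lfunE. Qed.

Lemma Tin t : t \in T -> (p \o t)%VF \in T'.
Proof. by move=> tT; apply/T'P; exists t. Qed.

Lemma proj_step : exists x, forall t, t \in T -> F t - t x \in <[y]>%VS.
Proof.
have T'0 : 0 \in T' by have := Tin T0; rewrite comp_lfun0r.
have T'B : forall s t, s \in T' -> t \in T' -> s - t \in T'.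
  move=> s t /T'P [s0 [s0T ->]] /T'P [t0 [t0T ->]].
  by rewrite -comp_lfunNr -comp_lfunDr; apply/Tin/TB.
have ST' : forall s, s \in (Cp @: S)%VS -> s \in T'.
  by move=> s /memv_imgP [t tS ->]; rewrite CpE; apply/Tin/ST.
have G'add : forall s t, s \in T' -> t \in T' -> G (s + t) = G s + G t.
  move=> s t /T'P [s0 [s0T ->]] /T'P [t0 [t0T ->]].
  have Tst : s0 + t0 \in T.
    by rewrite -[t0]opprK -[- t0]add0r; apply/TB/TB.
  by rewrite -comp_lfunDr !GE // Fadd // linearD.
have Grc : range_compatible T' G.
  move=> s /T'P [t [tT ->]]; rewrite GE //.
  have /memv_imgP [w _ ->] := Frc tT.
  by rewrite -comp_lfunE; apply: memv_img; apply: memvf.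
have codim' : (\dim {:'Hom(U, subvs_of W')} - \dim (Cp @: S)%VS + 2 <= \dim {:subvs_of W'})%N.
  have surj : limg Cp = fullv.
    apply/eqP; rewrite eqEsubv subvf /=; apply/subvP => s _.
    apply/memv_imgP; exists (linfun vsval \o s)%VF; first exact: memvf.
    by rewrite CpE; apply/lfunP => u; rewrite [RHS]comp_lfunE [X in p X]comp_lfunE [X in p X]lfunE p_sec.
  have dker := limg_ker_dim Cp fullv; rewrite capfv surj in dker.
  have dS' := limg_ker_dim Cp S.
  have ker_lt : (\dim (S :&: lker Cp) < \dim (lker Cp))%N.
    rewrite (ltn_leqif (dimv_leqif_eq (capvSr _ _))); apply: contra good => /eqP E.
    have : rk1 y j \in lker Cp.
      rewrite memv_ker CpE; apply/eqP/lfunP => u.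
      rewrite [LHS]comp_lfunE rk1E linearZ zero_lfunE; apply/eqP.
      by rewrite scaler_eq0 pker memv_line orbT.
    by rewrite -E memv_cap => /andP [].
  have dS'' : (\dim S < \dim (lker Cp) + \dim (Cp @: S))%N by rewrite -dS' ltn_add2r.
  have kpos : (0 < \dim (lker Cp))%N by apply: leq_ltn_trans ker_lt.
  clear dS' ker_lt.
  have d4 := dimvS (subvf S).
  have d5 := dimvS (subvf (Cp @: S)%VS).
  have codim := codimS.
  rewrite !dimHom in dker d4 d5 codim *.
  rewrite dimW mulnS in dker d4 codim.
  set n := \dim {:U} in dker d4 d5 codim *.
  set m := \dim {:subvs_of W'} in dker d4 d5 codim *.
  set k := \dim (lker Cp) in dker dS'' kpos *.
  set s' := \dim (Cp @: S) in dS'' d5 *.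
  set s := \dim S in dS'' d4 codim *.
  clearbody k s' s n m.
  nia.
have [x Hx] := IH T'0 T'B ST' codim' G'add Grc.
exists x => t tT.
have E := GE tT; rewrite Hx ?Tin // in E.
have E2 : (p \o t)%VF x = p (t x) by rewrite [LHS]comp_lfunE.
have LB : p (F t - t x) = p (F t) - p (t x) := linearB p _ _.
have key : p (F t - t x) = 0 by rewrite LB -E E2 subrr.
by rewrite -pker; apply/eqP; exact: key.
Qed.

End Tst.

Lemma line_cap0 (K : fieldType) (V : vectType K) (y1 y2 v : V) :
  y1 != 0 -> y2 \notin <[y1]>%VS -> v \in <[y1]>%VS -> v \in <[y2]>%VS -> v = 0.
Proof.
move=> y1n0 y2n /vlineP [a ->] /vlineP [b Eb].
have : b *: y2 + (- a) *: y1 = 0 by rewrite -Eb scaleNr subrr.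
by case/(indep2 y1n0 y2n) => _ /eqP; rewrite oppr_eq0 => /eqP ->; rewrite scale0r.
Qed.

Lemma main_ind (K : fieldType) (U : vectType K) :
  forall m (V : vectType K), \dim {:V} = m -> local_thm U V.
Proof.
elim/ltn_ind => m IHm V dV T T0 TB S ST codimS F Fadd Frc.
have [SF | SnF] := eqVneq S fullv.
  have allT t : t \in T by apply: ST; rewrite SF memvf.
  have dimV : (1 < \dim {:V})%N by move: codimS; rewrite SF subnn.
  have [x Hx] := full_local (fun s t => Fadd s t (allT s) (allT t)) (fun t => Frc t (allT t)) dimV.
  by exists x => t _.
have dSlt : (\dim S < \dim {:'Hom(U,V)})%N.
  by rewrite (ltn_leqif (dimv_leqif_eq (subvf S))).
have dimV : (2 < \dim {:V})%N.
  by move: codimS dSlt; move: (\dim S) (\dim {:'Hom(U,V)}) (\dim {:V}) => a b c; lia.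
have [t0 _ t0n] : exists2 t, t \in fullv & t \notin S.
  apply/subvPn; apply: contra SnF => H; rewrite eqEsubv H subvf //.
have : ~~ [forall j : 'I_(\dim {:U}), rk1 (t0 (vbasis {:U})`_j) j \in S].
  apply: contra t0n => /forallP H; rewrite [t0]rk1_decomp.
  by apply: memv_suml => j _; apply: H.
rewrite negb_forall => /existsP [j good1].
set y1 := t0 (vbasis {:U})`_j in good1.
have rk10 : forall j', rk1 (0 : V) j' = 0 :> 'Hom(U,V).
  by move=> j'; apply/lfunP => u; rewrite rk1E scaler0 zero_lfunE.
have y1n0 : y1 != 0 by apply: contra good1 => /eqP ->; rewrite rk10 mem0v.
have [b _ bn] : exists2 b, b \in fullv & b \notin <[y1]>%VS.
  apply/subvPn; apply: contraTN dimV => /dimvS; rewrite dim_vline y1n0 => H.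
  by rewrite -ltnNge ltnS (leq_trans H).
have [y2 [y2n good2]] : exists y2, y2 \notin <[y1]>%VS /\ rk1 y2 j \notin S.
  have [bS | bnS] := boolP (rk1 b j \in S); last by exists b.
  exists (y1 + b); split; first exact: notin_line_add (memv_line _) bn.
  apply: contra good1 => H.
  by have := memvB H bS; rewrite rk1D addrK.
have y2n0 : y2 != 0 by apply: contra y2n => /eqP ->; apply: mem0v.
have IHy (y : V) (yn0 : y != 0) : local_thm U (subvs_of <[y]>^C).
  apply: (IHm (\dim {:subvs_of <[y]>^C})) => //.
  by rewrite -dV (dimW yn0).
have [x1 Hx1] := proj_step y1n0 T0 TB ST codimS Fadd Frc good1 (IHy _ y1n0).
have [x2 Hx2] := proj_step y2n0 T0 TB ST codimS Fadd Frc good2 (IHy _ y2n0).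
have z0 : x2 - x1 = 0.
  apply: (glue codimS good1) => t tS.
  have tT := ST t tS.
  have -> : t (x2 - x1) = (F t - t x1) + - (F t - t x2).
    by rewrite linearB opprB [RHS]addrC addrA subrK.
  by apply: memv_add; [exact: Hx1 | rewrite memvN; exact: Hx2].
exists x1 => t tT; apply/eqP; rewrite -subr_eq0; apply/eqP.
apply: (line_cap0 y1n0 y2n (Hx1 t tT)).
by move/eqP: z0; rewrite subr_eq0 => /eqP <-; exact: Hx2.
Qed.

Unset Implicit Arguments.

Theorem theorem2p8 (K : fieldType) (U V : vectType K)
  (T : {pred 'Hom(U, V)})
  (T0 : 0 \in T) (TB : forall s t, s \in T -> t \in T -> s - t \in T)
  (S : {vspace 'Hom(U, V)}) (ST : forall s, s \in S -> s \in T)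
  (codimS : (\dim {:'Hom(U, V)} - \dim S + 2 <= \dim {:V})%N)
  (F : 'Hom(U, V) -> V)
  (Fadd : forall s t, s \in T -> t \in T -> F (s + t) = F s + F t)
  (Frc : range_compatible T F) :
  is_local T F.
Proof.
exact: (@main_ind K U _ V erefl T T0 TB S ST codimS F Fadd Frc).
Qed.
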